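(* Let $J$ be an instance of TAP and let $s_1,s_2,\dots,s_m$ be an enumeration of all schools (a master list of schools) such that, for every applicant $a$, the preference list of $a$ is the restriction of the order $s_1,\dots,s_m$ to $S(a)$. Then $J$ admits exactly one stable matching, namely the matching $\mathcal M$ produced by the following procedure (Dual Serial Dictatorship): start with $\mathcal M=\emptyset$; for $j=1,2,\dots,m$ in turn, go through the preference list $a_{i_1},\dots,a_{i_\ell}$ of $s_j$ in order and, for $r=1,\dots,\ell$, if $a_{i_r}$ is currently unassigned in $\mathcal M$ and $|\mathcal M_p(s_j)|<c_p(s_j)$ for both subjects $p\in\mathbf p(a_{i_r})$, add $(a_{i_r},s_j)$ to $\mathcal M$.
   Context: An instance of the Teachers Assignment Problem (TAP) consists of a finite set $A$ of applicants, a finite set $S$ of schools and a finite set $P$ of subjects. Each applicant $a\in A$ has a type $\mathbf p(a)=\{p_1(a),p_2(a)\}\subseteq P$ consisting of two distinct subjects, a set $S(a)\subseteq S$ of acceptable schools, and a strict linear order (her preference list) on $S(a)$. Each school $s$ has a partial capacity $c_p(s)\in\mathbb N$ for each subject $p\in P$, and a strict linear order (its preference list) on the set of applicants $a$ with $s\in S(a)$. An assignment $\mathcal M$ is a set of pairs $(a,s)$ with $s\in S(a)$ such that each applicant lies in at most one pair; write $\mathcal M(a)=s$ if $(a,s)\in\mathcal M$ and $\mathcal M(a)=\emptyset$ if $a$ is in no pair (unassigned). For a school $s$ and subjects $p,r$ let $\mathcal M_p(s)=\{a:(a,s)\in\mathcal M,\ p\in\mathbf p(a)\}$ and $\mathcal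 M_{p,r}(s)=\{a:(a,s)\in\mathcal M,\ \mathbf p(a)=\{p,r\}\}$. An assignment is a matching if $|\mathcal M_p(s)|\le c_p(s)$ for all $s\in S$, $p\in P$. School $s$ is undersubscribed in $p$ if $|\mathcal M_p(s)|<c_p(s)$. A pair $(a,s)$ with $s\in S(a)$ and $\mathbf p(a)=\{p_1,p_2\}$ blocks a matching $\mathcal M$ if ($a$ is unassigned or $a$ prefers $s$ to $\mathcal M(a)$) and at least one of: (i) $s$ is undersubscribed in both $p_1$ and $p_2$; (ii) for some $i\in\{1,2\}$, $s$ is undersubscribed in $p_i$ and $s$ prefers $a$ to some applicant in $\mathcal M_{p_{3-i}}(s)$; (iii) $s$ prefers $a$ to some applicant in $\mathcal M_{p_1,p_2}(s)$; (iv) $s$ prefers $a$ to two distinct applicants $a_1\in\mathcal M_{p_1}(s)$ and $a_2\in\mathcal M_{p_2}(s)$. A matching is stable if no pair blocks it. *)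

(* Defs.v *)
From HB Require Import structures.
From mathcomp Require Import all_boot.
Set Implicit Arguments. Unset Strict Implicit. Unset Printing Implicit Defensive.

(* An instance of the Teachers Assignment Problem over finite sets of
   applicants A, schools S and subjects P.  Preference lists are given as
   sequences (most preferred first); acceptability is membership. *)
Record TAP (A S P : finType) := MkTAP {
  p1 : A -> P;                 (* first subject of the type of a *)
  p2 : A -> P;
  alist : A -> seq S;
  slist : S -> seq A;
  cap : S -> P -> nat
}.

Section TAPDefs.
Variables (A S P : finType) (J : TAP A S P).

Definition TAP_wf : Prop :=
  [/\ forall a, p1 J a != p2 J a,
      forall a, uniq (alist J a),
      forall s, uniq (slist J s) &
      forall a s, (a \in slist J s) = (s \in alist J a)].

Definition acceptable (a : A) (s : S) : bool := s \in alist J a.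

Definition has_subject (a : A) (p : P) : bool := (p1 J a == p) || (p2 J a == p).

Definition has_type (a : A) (p r : P) : bool :=
  ((p1 J a == p) && (p2 J a == r)) || ((p1 J a == r) && (p2 J a == p)).

Definition assignment := {ffun A -> option S}.

Definition is_assignment (M : assignment) : Prop :=
  forall a s, M a = Some s -> acceptable a s.

Definition Msub (M : assignment) (s : S) (p : P) : {set A} :=
  [set a | (M a == Some s) && has_subject a p].

Definition Mtype (M : assignment) (s : S) (p r : P) : {set A} :=
  [set a | (M a == Some s) && has_type a p r].

Definition is_matching (M : assignment) : Prop :=
  is_assignment M /\ forall s p, #|Msub M s p| <= cap J s p.

Definition undersub (M : assignment) (s : S) (p : P) : bool :=
  #|Msub M s p| < cap J s p.

Definition sprefers (s : S) (a b : A) : bool :=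
  index a (slist J s) < index b (slist J s).

Definition aprefers (a : A) (s t : S) : bool :=
  index s (alist J a) < index t (alist J a).

Definition wants (M : assignment) (a : A) (s : S) : bool :=
  if M a is Some t then aprefers a s t else true.

Definition blocks (M : assignment) (a : A) (s : S) : Prop :=
  acceptable a s /\ wants M a s /\
  [\/ undersub M s (p1 J a) && undersub M s (p2 J a),
      (undersub M s (p1 J a) /\ exists2 b, b \in Msub M s (p2 J a) & sprefers s a b)
      \/ (undersub M s (p2 J a) /\ exists2 b, b \in Msub M s (p1 J a) & sprefers s a b),
      (exists2 b, b \in Mtype M s (p1 J a) (p2 J a) & sprefers s a b) |
      exists b1 b2, [/\ b1 \in Msub M s (p1 J a), b2 \in Msub M s (p2 J a),
                        b1 != b2, sprefers s a b1 & sprefers s a b2]].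

Definition stable (M : assignment) : Prop :=
  is_matching M /\ forall a s, ~ blocks M a s.

Definition dsd_step (s : S) (M : assignment) (a : A) : assignment :=
  if (M a == None) && undersub M s (p1 J a) && undersub M s (p2 J a)
  then [ffun x => if x == a then Some s else M x]
  else M.

Definition dsd_school (M : assignment) (s : S) : assignment :=
  foldl (dsd_step s) M (slist J s).

Definition dsd (ms : seq S) : assignment :=
  foldl dsd_school [ffun => None] ms.

Definition master_list (ms : seq S) : Prop :=
  [/\ uniq ms, forall s, s \in ms &
      forall a, alist J a = [seq s <- ms | s \in alist J a]].

End TAPDefs.

(* Main.v *)
Require Import Defs.
From mathcomp Require Import all_boot.
Set Implicit Arguments. Unset Strict Implicit. Unset Printing Implicit Defensive.

Lemma cat_split (T : eqType) (X Y L R : seq T) (z : T) :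
  X ++ Y = L ++ z :: R ->
  (exists L2, L = X ++ L2 /\ Y = L2 ++ z :: R) \/
  (exists X1 X2, X = X1 ++ z :: X2 /\ L = X1).
Proof.
elim: X L => [|x X IH] L /=; first by move=> ->; left; exists L.
case: L => [|l L] /= [<- H]; first by right; exists [::], X.
case: (IH L H) => [[L2 [-> ->]]|[X1 [X2 [-> ->]]]].
  by left; exists L2.
by right; exists (x :: X1), X2.
Qed.

Lemma map_split (T U : Type) (f : T -> U) w X1 X2 z :
  map f w = X1 ++ z :: X2 ->
  exists u y v, [/\ w = u ++ y :: v, map f u = X1 & f y = z].
Proof.
elim: w X1 => [|y w IH] [|x1 X1] //= [E1 E2].
  by exists [::], y, w.
have [u [y' [v [-> <- <-]]]] := IH _ E2.
by exists (y :: u), y', v; rewrite /= E1.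
Qed.

Lemma decomp (T U : eqType) (sl : T -> seq U) ms L s a R :
  [seq (t, x) | t <- ms, x <- sl t] = L ++ (s, a) :: R ->
  exists pre post u v,
    [/\ ms = pre ++ s :: post, sl s = u ++ a :: v &
        L = [seq (t, x) | t <- pre, x <- sl t] ++ [seq (s, x) | x <- u]].
Proof.
elim: ms L => [|t ms IH] L /=; first by case: L.
case/cat_split => [[L2 [-> H]]|[X1 [X2 [H ->]]]].
  have [pre [post [u [v [-> E ->]]]]] := IH _ H.
  by exists (t :: pre), post, u, v; rewrite /= catA.
have [u [y [v [E1 E2 [E3 E4]]]]] := map_split H.
subst; exists [::], ms, u, v; split => //.
Qed.

Lemma memL (T U : eqType) (sl : T -> seq U) pre s u t x :
  ((t, x) \in [seq (t, x) | t <- pre, x <- sl t] ++ [seq (s, x) | x <- u]) =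
  (t \in pre) && (x \in sl t) || (t == s) && (x \in u).
Proof.
rewrite mem_cat; congr orb.
  apply/allpairsPdep/andP => [[t' [x' [? ? [-> ->]]]]|[? ?]] //.
  by exists t, x.
apply/mapP/andP => [[x' ? [-> ->]]|[/eqP-> ?]]; first by rewrite eqxx.
by exists x.
Qed.

Lemma index_piv (T : eqType) (u v : seq T) a b :
  uniq (u ++ a :: v) ->
  (b \in u -> index b (u ++ a :: v) < index a (u ++ a :: v)) /\
  (b \in v -> index a (u ++ a :: v) < index b (u ++ a :: v)).
Proof.
rewrite cat_uniq /= => /and4P[_ /norP[aNu uv] aNv _].
rewrite !index_cat (negPf aNu) /= eqxx addn0; split.
  by move=> bu; rewrite bu index_mem.
move=> bv; have bNu : b \notin u.
  by apply: contraNN uv => bu; apply/hasP; exists b.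
rewrite (negPf bNu) /=; case: eqP => [ab|]; last by rewrite addnS ltnS leq_addr.
by rewrite ab bv in aNv.
Qed.

Lemma split_mem (T : eqType) (x : T) s : x \in s -> exists L R, s = L ++ x :: R.
Proof. by case/splitPr => L R; exists L, R. Qed.

Section Main.
Variables (A S P : finType) (J : TAP A S P) (ms : seq S).
Hypothesis wf : TAP_wf J.
Hypothesis ml : master_list J ms.

Definition g (E : {ffun A -> option S}) (p : S * A) := dsd_step J p.1 E p.2.
Definition E0 : {ffun A -> option S} := [ffun => None].
Definition Ps := [seq (s, a) | s <- ms, a <- slist J s].
Definition cond (E : {ffun A -> option S}) s a :=
  (E a == None) && undersub J E s (p1 J a) && undersub J E s (p2 J a).
Definition restr (N : {ffun A -> option S}) (L : seq (S * A)) x :=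
  if N x is Some t then (if (t, x) \in L then Some t else None) else None.

Lemma wfmem a s : (a \in slist J s) = (s \in alist J a).
Proof. by case: wf. Qed.
Lemma uslist s : uniq (slist J s).
Proof. by case: wf. Qed.
Lemma p12 a : p1 J a != p2 J a.
Proof. by case: wf. Qed.
Lemma ums : uniq ms.
Proof. by case: ml. Qed.
Lemma mems s : s \in ms.
Proof. by case: ml. Qed.
Lemma alist_eq a : alist J a = [seq s <- ms | s \in alist J a].
Proof. by case: ml. Qed.

Lemma memPs s a : ((s, a) \in Ps) = (a \in slist J s).
Proof.
apply/allpairsPdep/idP => [[t [x [_ ? [-> ->]]]]|?] //.
by exists s, a; rewrite mems.
Qed.

Lemma uPs : uniq Ps.
Proof.
apply: allpairs_uniq_dep; [exact: ums| move=> ? _; exact: uslist|].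
by case=> [_ _] [x t] _ _ [-> ->].
Qed.

Lemma step_eq (E : {ffun A -> option S}) s a x :
  g E (s, a) x = if (x == a) && cond E s a then Some s else E x.
Proof.
rewrite /g /dsd_step /cond /=.
by case: (_ && _ && _); rewrite ?ffunE ?andbT ?andbF.
Qed.

Lemma fold_mono L (E : {ffun A -> option S}) x t : E x = Some t -> foldl g E L x = Some t.
Proof.
elim: L E => //= [[s a] L IH] E H; apply: IH; rewrite step_eq.
case: ifP => // /andP[/eqP xa]; rewrite /cond -xa H.
by [].
Qed.

Lemma fold_src L (E : {ffun A -> option S}) x t : foldl g E L x = Some t -> E x = Some t \/ (t, x) \in L.
Proof.
elim: L E => [|[s a] L IH] E /=; first by left.
move/IH => [H|H]; last by right; rewrite inE H orbT.
move: H; rewrite step_eq; case: ifP => [/andP[/eqP -> _] [<-]|_]; last by left.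
by right; rewrite mem_head.
Qed.

Lemma char L R : uniq (L ++ R) ->
  forall x, foldl g E0 L x = restr (foldl g E0 (L ++ R)) L x.
Proof.
move=> U x; rewrite foldl_cat /restr.
case Ex: (foldl g E0 L x) => [t|].
  rewrite (fold_mono _ Ex); have [|->] // := fold_src Ex.
  by rewrite ffunE.
case Dx: (foldl g (foldl g E0 L) R x) => [t|] //; case: ifP => // tL.
have [|tR] := fold_src Dx; first by rewrite Ex.
by move: U; rewrite cat_uniq => /and3P[_ /hasPn /(_ _ tR)]; rewrite /= tL.
Qed.

Lemma match_fold L : {subset L <= Ps} -> is_matching J (foldl g E0 L).
Proof.
elim/last_ind: L => [|L [s a] IH] sub.
  split; first by move=> a s; rewrite ffunE.
  move=> s p; rewrite (_ : Msub J E0 s p = set0) ?cards0 //.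
  by apply/setP=> x; rewrite !inE ffunE.
have [asg capE] : is_matching J (foldl g E0 L).
  by apply: IH => z zL; apply: sub; rewrite mem_rcons inE zL orbT.
have saP : (s, a) \in Ps by apply: sub; rewrite mem_rcons mem_head.
have aS : a \in slist J s by rewrite -memPs.
rewrite foldl_rcons /g /dsd_step /=.
set E := foldl g E0 L.
case: ifP => [/andP[/andP[/eqP Ea U1] U2]|_]; last by split.
split.
  move=> x t; rewrite ffunE; case: ifP => [/eqP -> [<-]|_ /asg //].
  by rewrite /acceptable -wfmem.
move=> s' p; case h: ((s' == s) && has_subject J a p).
  move/andP: h => [/eqP-> hp].
  apply: leq_trans (_ : #|a |: Msub J E s p| <= _).
    apply: subset_leq_card; apply/subsetP=> x; rewrite !inE ffunE.
    by case: (x == a).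
  rewrite cardsU1; apply: leq_trans (leq_add (leq_b1 _) (leqnn _)) _.
  by rewrite add1n; case/orP: hp => /eqP <-; [exact: U1|exact: U2].
rewrite (_ : Msub J _ s' p = Msub J E s' p); first exact: capE.
apply/setP=> x; rewrite !inE ffunE; case: (eqVneq x a) => [->|_] //.
rewrite Ea /=; case: eqP => //= [[esa]].
by move: h; rewrite esa eqxx.
Qed.

Lemma apref_pre a s t pre post : ms = pre ++ s :: post -> s \in alist J a ->
  t \in pre -> t \in alist J a -> ~~ aprefers J a s t.
Proof.
move=> Hms sA tp tA.
have U := filter_uniq (fun x => x \in alist J a) ums.
rewrite /aprefers (alist_eq a) Hms filter_cat /= sA.
rewrite Hms filter_cat /= sA in U.
have [h _] := index_piv t U.
by rewrite -leqNgt ltnW // h // mem_filter tA.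
Qed.

Lemma apref_post a s t pre post : ms = pre ++ s :: post -> s \in alist J a ->
  t \notin pre -> t != s -> t \in alist J a -> aprefers J a s t.
Proof.
move=> Hms sA tp ts tA.
have U := filter_uniq (fun x => x \in alist J a) ums.
rewrite /aprefers (alist_eq a) Hms filter_cat /= sA.
rewrite Hms filter_cat /= sA in U.
have [_ h] := index_piv t U.
apply: h; rewrite mem_filter tA /=.
by move: (mems t); rewrite Hms mem_cat inE (negPf tp) (negPf ts).
Qed.

Lemma spref_u s a b u v : slist J s = u ++ a :: v -> b \in u -> ~~ sprefers J s a b.
Proof.
move=> Hsl bu; have U := uslist s; rewrite Hsl in U.
have [h _] := index_piv b U.
by rewrite /sprefers Hsl -leqNgt ltnW // h.
Qed.

Lemma spref_v s a b u v : slist J s = u ++ a :: v -> b \in slist J s ->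
  b \notin u -> b != a -> sprefers J s a b.
Proof.
move=> Hsl bS bu ba; have U := uslist s; rewrite Hsl in U.
have [_ h] := index_piv b U.
rewrite /sprefers Hsl; apply: h.
by move: bS; rewrite Hsl mem_cat inE (negPf bu) (negPf ba).
Qed.

Lemma msub_char N (E : {ffun A -> option S}) L s p : (forall x, E x = restr N L x) ->
  Msub J E s p = [set x | (N x == Some s) && ((s, x) \in L) && has_subject J x p].
Proof.
move=> H; apply/setP=> x; rewrite !inE H /restr; case: (N x) => [t|] //.
case: (eqVneq t s) => [->|ne]; first by case: ((s, x) \in L); rewrite ?eqxx.
have E1 : (Some t == Some s) = false.
  by apply/negbTE; apply/eqP => -[ts]; rewrite ts eqxx in ne.
by case: ifP => _ /=; rewrite E1.
Qed.

Lemma subj_type b p r : has_subject J b p -> has_subject J b r -> p != r ->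
  has_type J b p r.
Proof.
by rewrite /has_subject /has_type => /orP[]/eqP<- /orP[]/eqP<-; rewrite ?eqxx ?orbT.
Qed.

Lemma type_subj b p r : has_type J b p r -> has_subject J b p && has_subject J b r.
Proof.
by rewrite /has_subject /has_type => /orP[]/andP[]/eqP-> /eqP->; rewrite ?eqxx ?orbT.
Qed.

Lemma condM M L s a R (E : {ffun A -> option S}) : stable J M ->
  Ps = L ++ (s, a) :: R -> (forall x, E x = restr M L x) ->
  cond E s a = (M a == Some s).
Proof.
move=> [[Masg Mcap] Mnb] HPs HE.
have := uPs; rewrite HPs cat_uniq => /and3P[_ /hasPn nL _].
have saL : (s, a) \notin L by apply: nL; rewrite mem_head.
have [pre [post [u [v [Hms Hsl HL]]]]] := decomp HPs.
have memLL t x : ((t, x) \in L) = (t \in pre) && (x \in slist J t) || (t == s) && (x \in u).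
  by rewrite HL memL.
have HY q := msub_char s q HE.
apply/idP/eqP.
  move=> /andP[/andP[/eqP Ea U1] U2].
  case: (eqVneq (M a) (Some s)) => // Mas; exfalso.
  have Wt : wants J M a s.
    rewrite /wants; case Mt: (M a) => [t|] //.
    have tA : t \in alist J a by apply: Masg.
    have tNs : t != s by apply: contraNneq Mas => ts; rewrite Mt ts.
    have tL : (t, a) \notin L by move: Ea; rewrite HE /restr Mt; case: ifP.
    have sA : s \in alist J a by rewrite -wfmem Hsl mem_cat mem_head orbT.
    have tNp : t \notin pre.
      by apply: contraNN tL => tpre; rewrite memLL tpre wfmem tA.
    exact: (apref_post Hms sA tNp tNs tA).
  have key q : undersub J E s q -> ~~ undersub J M s q ->
      exists2 b, b \in Msub J M s q & sprefers J s a b.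
    rewrite /undersub -leqNgt => Uq capq.
    have : ~~ (Msub J M s q \subset Msub J E s q).
      by apply/negP => /subset_leq_card; apply/negP; rewrite -ltnNge (leq_trans Uq capq).
    case/subsetPn => b bX bNY; exists b => //.
    move: bX bNY; rewrite HY !inE => /andP[/eqP Mb hb]; rewrite Mb eqxx hb /= andbT => bL.
    apply: (spref_v Hsl).
    - by rewrite wfmem; apply: Masg.
    - by apply: contraNN bL => bu; rewrite memLL bu eqxx orbT.
    - by apply: contraNneq Mas => ba; rewrite -ba Mb.
  apply: (Mnb a s); split; first by rewrite /acceptable -wfmem Hsl mem_cat mem_head orbT.
  split; first exact: Wt.
  case U1M: (undersub J M s (p1 J a)); case U2M: (undersub J M s (p2 J a)).
  - by apply: Or41.
  - have [b ? ?] := key _ U2 (negbT U2M).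
    by apply: Or42; left; split => //; exists b.
  - have [b ? ?] := key _ U1 (negbT U1M).
    by apply: Or42; right; split => //; exists b.
  - have [b1 b1X b1p] := key _ U1 (negbT U1M).
    have [b2 b2X b2p] := key _ U2 (negbT U2M).
    case: (eqVneq b1 b2) => [eb|nb]; last by apply: Or44; exists b1, b2.
    apply: Or43; exists b1 => //; subst b2.
    move: b1X b2X; rewrite !inE => /andP[-> h1] /andP[_ h2] /=.
    exact: subj_type h1 h2 (p12 a).
move=> Mas; rewrite /cond.
have Ea : E a = None by rewrite HE /restr Mas (negPf saL).
have U q : has_subject J a q -> undersub J E s q.
  move=> hq; rewrite /undersub; apply: leq_trans (Mcap s q).
  apply: proper_card; apply/properP; split.
    by apply/subsetP=> x; rewrite HY !inE => /andP[/andP[-> _] ->].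
  by exists a; rewrite ?HY !inE ?Mas ?eqxx ?hq ?(negPf saL).
by rewrite Ea eqxx !U // /has_subject eqxx ?orbT.
Qed.

Lemma inv_M M : stable J M -> forall L R, Ps = L ++ R ->
  forall x, foldl g E0 L x = restr M L x.
Proof.
move=> stM; elim/last_ind => [|L [s a] IH] R HPs x.
  by rewrite /= ffunE /restr; case: (M x).
have HPs' : Ps = L ++ (s, a) :: R by rewrite HPs cat_rcons.
have IHL := IH _ HPs'.
rewrite foldl_rcons step_eq (condM stM HPs' IHL) /restr.
case: (eqVneq x a) => [->|nxa] /=.
  case: eqP => [->|Mas]; first by rewrite mem_rcons mem_head.
  rewrite IHL /restr; case: (M a) Mas => [t|] // tne.
  rewrite mem_rcons inE.
  have -> : ((t, a) == (s, a)) = false.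
    by apply/eqP => -[ts]; apply: tne; rewrite ts.
  by [].
rewrite IHL /restr; case: (M x) => [t|] //; rewrite mem_rcons inE.
have -> : ((t, x) == (s, a)) = false by apply/eqP => -[_ xa]; rewrite xa eqxx in nxa.
by [].
Qed.

Lemma D_stable_aux L s a R : Ps = L ++ (s, a) :: R -> ~ blocks J (foldl g E0 Ps) a s.
Proof.
move=> HPs.
have HE x : foldl g E0 L x = restr (foldl g E0 Ps) L x.
  by rewrite HPs; apply: char; rewrite -HPs uPs.
have Dnext : cond (foldl g E0 L) s a -> foldl g E0 Ps a = Some s.
  move=> C; rewrite HPs foldl_cat /=; apply: fold_mono.
  by rewrite step_eq eqxx C.
have Dm : is_matching J (foldl g E0 Ps) by apply: match_fold.
move: (foldl g E0 Ps) Dm HE Dnext => D [Dasg Dcap] HE Dnext.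
set E := foldl g E0 L in HE Dnext *.
have := uPs; rewrite HPs cat_uniq => /and3P[_ /hasPn nL _].
have saL : (s, a) \notin L by apply: nL; rewrite mem_head.
have [pre [post [u [v [Hms Hsl HL]]]]] := decomp HPs.
have memLL t x : ((t, x) \in L) = (t \in pre) && (x \in slist J t) || (t == s) && (x \in u).
  by rewrite HL memL.
have sNpre : s \notin pre.
  by have := ums; rewrite Hms cat_uniq => /and3P[_ /hasPn /(_ s (mem_head _ _))].
have HY q := msub_char s q HE.
move=> [acc [Wt blk]].
have Das : D a != Some s.
  by apply/eqP => Das; move: Wt; rewrite /wants Das /aprefers ltnn.
have Ea : E a = None.
  rewrite HE /restr; case Dt: (D a) => [t|] //; case: ifP => // tL; exfalso.
  have tA : t \in alist J a by apply: Dasg.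
  have tNs : t != s by apply: contraNneq Das => ts; rewrite Dt ts.
  have tpre : t \in pre by move: tL; rewrite memLL (negPf tNs) andFb orbF => /andP[].
  by move: Wt; rewrite /wants Dt; apply/negP; apply: apref_pre Hms acc tpre tA.
have notC : ~~ (undersub J E s (p1 J a) && undersub J E s (p2 J a)).
  apply/negP => H; move/eqP: Das; apply; apply: Dnext.
  by rewrite /cond Ea eqxx /=.
have YX q : Msub J E s q \subset Msub J D s q.
  by apply/subsetP => x; rewrite HY !inE => /andP[/andP[-> _] ->].
have key q b : b \in Msub J D s q -> sprefers J s a b -> undersub J E s q.
  move=> bX bp; rewrite /undersub; apply: leq_trans (Dcap s q).
  apply: proper_card; apply/properP; split; first exact: YX.
  exists b => //; rewrite HY !inE; apply/negP => /andP[/andP[_ sbL] _].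
  move: sbL; rewrite memLL (negPf sNpre) eqxx /= => bu.
  by move: bp; apply/negP; apply: spref_u Hsl bu.
have weak q : undersub J D s q -> undersub J E s q.
  by rewrite /undersub => h; apply: leq_ltn_trans (subset_leq_card (YX q)) h.
move/negP: notC; apply.
case: blk => [/andP[h1 h2]|[[h1 [b bX bp]]|[h2 [b bX bp]]]|[b bT bp]|
              [b1 [b2 [b1X b2X _ bp1 bp2]]]].
- by rewrite !weak.
- by rewrite (weak _ h1) (key _ b).
- by rewrite (weak _ h2) (key _ b).
- move: bT; rewrite inE => /andP[Db /type_subj/andP[h1 h2]].
  by rewrite (key _ b) ?(key _ b) // inE Db.
- by rewrite (key _ b1) // (key _ b2).
Qed.

Lemma fold_gen l M0 : foldl (dsd_school J) M0 l =
  foldl g M0 [seq (s, a) | s <- l, a <- slist J s].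
Proof.
elim: l M0 => //= s l IH M0; rewrite foldl_cat -IH; congr foldl.
rewrite /dsd_school; elim: (slist J s) M0 => //= a w IHw M0; exact: IHw.
Qed.

Lemma dsd_flat : dsd J ms = foldl g E0 Ps.
Proof. by rewrite /dsd fold_gen. Qed.

Lemma main : stable J (dsd J ms) /\ (forall M, stable J M -> M = dsd J ms).
Proof.
rewrite dsd_flat; split.
  split; first by apply: match_fold.
  move=> a s bl; have acc := bl.1.
  have : (s, a) \in Ps by rewrite memPs wfmem.
  case/split_mem => L [R HPs]; exact: D_stable_aux HPs bl.
move=> M stM; apply/ffunP => x.
rewrite (inv_M stM (R := [::])) ?cats0 // /restr.
case Mx: (M x) => [t|] //; rewrite memPs wfmem.
by case: stM => [[Masg _] _]; have := Masg x t Mx; rewrite /acceptable => ->.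
Qed.

End Main.

Theorem theorem3 (A S P : finType) (J : TAP A S P) (ms : seq S) :
  TAP_wf J -> master_list J ms ->
  stable J (dsd J ms) /\ (forall M, stable J M -> M = dsd J ms).
Proof. by move=> wf ml; exact: main. Qed.
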